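(* The skew characteristic polynomial is a $4$-invariant of simple graphs: for every simple graph $G$ and every pair of distinct vertices $a,b$ of $G$, $$Q_G(u)-Q_{G'_{ab}}(u)=Q_{\widetilde G_{ab}}(u)-Q_{\widetilde G'_{ab}}(u).$$
   Context: For a simple graph $G$, $A(G)$ denotes its adjacency matrix over $\mathbb{F}_2$ (entry $1$ iff the vertices are adjacent, zero diagonal), and the nondegeneracy $\nu(G)\in\{0,1\}$ equals $1$ iff $\det A(G)=1$ over $\mathbb{F}_2$ (with $\nu$ of the empty graph equal to $1$, the determinant of the empty matrix being $1$). The skew characteristic polynomial is $Q_G(u)=\sum_{U\subset V(G)}\nu(G|_U)\,u^{|V(G)|-|U|}$, where $G|_U$ is the subgraph induced on $U$. For vertices $a,b$: $G'_{ab}$ is obtained from $G$ by switching adjacency between $a$ and $b$; $\widetilde G_{ab}$ is obtained by switching the adjacency between $a$ and each vertex $v\ne a$ adjacent to $b$; $\widetilde G'_{ab}$ is the composition of these two operations. *)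

(* Defs.v *)
From mathcomp Require Import all_boot all_order all_algebra.
Set Implicit Arguments. Unset Strict Implicit. Unset Printing Implicit Defensive.
Import GRing.Theory.
Local Open Scope ring_scope.

Definition simple_graph (T : finType) (e : rel T) : Prop :=
  irreflexive e /\ symmetric e.

Definition adj_induced (T : finType) (e : rel T) (U : {set T}) : 'M['F_2]_#|U| :=
  \matrix_(i, j) (e (enum_val i) (enum_val j))%:R.

(* nondegeneracy of the induced subgraph G|_U : 1 iff det A(G|_U) = 1 over F_2
   (empty matrix has det 1). *)
Definition nu (T : finType) (e : rel T) (U : {set T}) : bool :=
  \det (adj_induced e U) == 1.

Definition skewQ (T : finType) (e : rel T) : {poly int} :=
  \sum_(U : {set T}) (nu e U)%:R *: 'X^(#|T| - #|U|).

Definition switch_ab (T : finType) (e : rel T) (a b : T) : rel T :=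
  fun x y => if ((x == a) && (y == b)) || ((x == b) && (y == a))
             then ~~ e x y else e x y.

(* ~G_ab : switch adjacency between a and every vertex v <> a adjacent to b *)
Definition tilde_ab (T : finType) (e : rel T) (a b : T) : rel T :=
  fun x y => e x y (+) (((x == a) && (y != a) && e b y)
                        || ((y == a) && (x != a) && e b x)).

Definition tilde_switch_ab (T : finType) (e : rel T) (a b : T) : rel T :=
  switch_ab (tilde_ab e a b) a b.

(* Main.v *)
Require Import Defs.
From mathcomp Require Import all_boot all_order all_algebra.
Set Implicit Arguments. Unset Strict Implicit. Unset Printing Implicit Defensive.
Import GRing.Theory.
Local Open Scope ring_scope.


Lemma F2_addxx (x : 'F_2) : x + x = 0.
Proof. by case: x => [[|[|n]] Hn] //; apply/val_inj. Qed.

Lemma natr_addb (b1 b2 : bool) : ((b1 (+) b2)%:R : 'F_2) = b1%:R + b2%:R.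
Proof. by case: b1; case: b2; rewrite ?addr0 ?add0r // F2_addxx. Qed.

Lemma mul_delta_l n (i0 j0 : 'I_n) (A : 'M['F_2]_n) i j :
  (delta_mx i0 j0 *m A) i j = (i == i0)%:R * A j0 j.
Proof.
rewrite mxE (bigD1 j0) //= big1 ?addr0; first by rewrite mxE eqxx andbT.
by move=> k /negbTE nk; rewrite mxE nk andbF mul0r.
Qed.

Lemma mul_delta_r n (i0 j0 : 'I_n) (A : 'M['F_2]_n) i j :
  (A *m delta_mx i0 j0) i j = A i i0 * (j == j0)%:R.
Proof.
rewrite mxE (bigD1 i0) //= big1 ?addr0; first by rewrite mxE eqxx.
by move=> k /negbTE nk; rewrite mxE nk mulr0.
Qed.


Lemma F2_sq1 (x : 'F_2) : x * x = 1 -> x = 1.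
Proof. by case: x => [[|[|n]] Hn] // _; apply/val_inj. Qed.

Lemma elem_det n (i0 j0 : 'I_n) : j0 != i0 -> \det (1%:M + delta_mx i0 j0 : 'M['F_2]_n) = 1.
Proof.
move=> ne; apply: F2_sq1; rewrite -det_mulmx mulmxDl !mulmxDr !mul1mx mulmx1.
rewrite mul_delta_mx_0 // addr0 -addrA.
have -> : delta_mx i0 j0 + delta_mx i0 j0 = 0 :> 'M['F_2]_n.
  by apply/matrixP => i j; rewrite !mxE F2_addxx.
by rewrite addr0 det1.
Qed.

Lemma det_conj n (i0 j0 : 'I_n) (A : 'M['F_2]_n) : j0 != i0 ->
  \det ((1%:M + delta_mx i0 j0) *m A *m (1%:M + delta_mx j0 i0)) = \det A.
Proof.
move=> ne; rewrite !det_mulmx elem_det // elem_det; last by rewrite eq_sym.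
by rewrite mul1r mulr1.
Qed.

Lemma nu_tilde (T : finType) (e : rel T) a b (U : {set T}) : simple_graph e -> a != b ->
  a \in U -> b \in U -> nu (tilde_ab e a b) U = nu e U.
Proof.
case=> irr sym nab Ha Hb.
set ia := enum_rank_in Ha a. set ib := enum_rank_in Ha b.
have ea : enum_val ia = a := enum_rankK_in Ha Ha.
have eb : enum_val ib = b := enum_rankK_in Ha Hb.
have nij : ib != ia by apply: contra nab => /eqP h; rewrite -ea -eb h.
rewrite /nu; set A := adj_induced e U.
have eD : forall (X Y : 'M['F_2]_#|U|) i j, (X + Y) i j = X i j + Y i j by move=> *; rewrite mxE.
have -> : adj_induced (tilde_ab e a b) U =
   (1%:M + delta_mx ia ib) *m A *m (1%:M + delta_mx ib ia).
  apply/matrixP => i j.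
  rewrite !(mulmxDl, mulmxDr, mul1mx, mulmx1) !eD !mul_delta_r !mul_delta_l.
  rewrite /A /adj_induced !mxE /tilde_ab natr_addb eb.
  have ei : (enum_val i == a) = (i == ia) by rewrite -ea (inj_eq enum_val_inj).
  have ej : (enum_val j == a) = (j == ia) by rewrite -ea (inj_eq enum_val_inj).
  rewrite ei ej irr.
  case: (i =P ia) => [->|_]; case: (j =P ia) => [->|_] /=;
    rewrite ?ea ?irr ?mul1r ?mul0r ?mulr1 ?mulr0 ?addr0 ?andbF ?orbF ?andbT //=.
    by rewrite add0r (sym a b) F2_addxx.
  by rewrite (sym b).
by rewrite det_conj.
Qed.


Lemma nu_ext (T : finType) (e e' : rel T) (U : {set T}) :
  (forall x y, x \in U -> y \in U -> e x y = e' x y) -> nu e U = nu e' U.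
Proof.
move=> H; rewrite /nu; congr (\det _ == 1).
by apply/matrixP => i j; rewrite !mxE H // enum_valP.
Qed.

Lemma simple_switch (T : finType) (e : rel T) a b : simple_graph e -> a != b ->
  simple_graph (switch_ab e a b).
Proof.
case=> irr sym nab; split.
  move=> x; rewrite /switch_ab irr.
  case: ifP => // /orP [] /andP [/eqP h1 /eqP h2];
    by move/eqP: nab; rewrite -h1 -h2.
move=> x y; rewrite /switch_ab sym.
by rewrite [(y == a) && _]andbC [(y == b) && _]andbC orbC.
Qed.

Lemma tilde_switchE (T : finType) (e : rel T) a b x y : a != b ->
  tilde_switch_ab e a b x y = tilde_ab (switch_ab e a b) a b x y.
Proof.
move=> nab; rewrite /tilde_switch_ab /tilde_ab /switch_ab.
have nba : (b == a) = false by rewrite eq_sym (negbTE nab).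
rewrite !eqxx nba /=.
case: (y =P a) => [->|ny]; case: (x =P a) => [->|nx] /=; rewrite ?eqxx ?nba ?(negbTE nab) ?andbT ?andbF ?orbF //=.
all: try by case: (x == b); rewrite ?negb_add //.
all: try by case: (y == b); rewrite ?negb_add //.
Qed.

Theorem mainTheorem3 (T : finType) (e : rel T) (a b : T) :
  simple_graph e -> a != b ->
  skewQ e - skewQ (switch_ab e a b) =
  skewQ (tilde_ab e a b) - skewQ (tilde_switch_ab e a b).
Proof.
move=> sg nab; rewrite /skewQ -!sumrB; apply: eq_bigr => U _.
rewrite -!scalerBl; congr (_ *: _).
have ets : nu (tilde_switch_ab e a b) U = nu (tilde_ab (switch_ab e a b) a b) U.
  by apply: nu_ext => x y _ _; rewrite tilde_switchE.
rewrite ets.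
case: (boolP ((a \in U) && (b \in U))) => [/andP [Ha Hb]|nin].
  by rewrite (nu_tilde sg nab Ha Hb) (nu_tilde (simple_switch sg nab) nab Ha Hb).
have swin : forall (f : rel T) x y, x \in U -> y \in U -> switch_ab f a b x y = f x y.
  move=> f x y Hx Hy; rewrite /switch_ab.
  case: ifP => // /orP [] /andP [/eqP ex /eqP ey]; subst;
    by rewrite ?Hx ?Hy in nin.
have swo : forall z, z != a -> switch_ab e a b b z = e b z.
  move=> z nz; rewrite /switch_ab (negbTE nz) eq_sym (negbTE nab).
  by rewrite !andbF.
have out : forall (f : rel T), nu (switch_ab f a b) U = nu f U.
  by move=> f; apply: nu_ext => x y Hx Hy; rewrite swin.
rewrite out.
have -> : nu (tilde_ab (switch_ab e a b) a b) U = nu (tilde_ab e a b) U.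
  apply: nu_ext => x y Hx Hy; rewrite /tilde_ab.
  rewrite swin //; congr (_ (+) (_ || _)).
    by case: (y =P a) => [->|/eqP ny]; rewrite ?eqxx ?andbF //= (swo _ ny).
  by case: (x =P a) => [->|/eqP nx]; rewrite ?eqxx ?andbF //= (swo _ nx).
by rewrite !subrr.
Qed.
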